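(* Let $M$ be a right $\ddot{\mathbb H}_\ell$-module. The linear map $\Psi_s: M\otimes_{\mathbb H_\ell}\mathcal V_s^{\otimes\ell}\to M\otimes_{\mathbb H_\ell}\mathcal V_{\tau s}^{\otimes\ell}$ given by $$\Psi_s(w\otimes v_{j_1}\otimes\cdots\otimes v_{j_\ell})=wX_1^{-\delta_{j_1,\kappa}}X_2^{-\delta_{j_2,\kappa}}\cdots X_\ell^{-\delta_{j_\ell,\kappa}}\otimes v_{j_1+1}\otimes\cdots\otimes v_{j_\ell+1}$$ for all $w\in M$ and all $j_1,\dots,j_\ell\in\{1,\dots,\kappa\}$ (with the convention $v_{\kappa+1}=v_1$) is well defined.
   Context: Fix integers $m,n\geqslant0$, $m\neq n$, $\kappa=m+n$; $q\in\mathbb C^\times$ not a root of unity, $\zeta\in\mathbb C^\times$, $\ell\geqslant1$. A parity sequence $s=(s_1,\dots,s_\kappa)\in\{\pm1\}^\kappa$ has exactly $m$ entries $1$; $\tau s=(s_\kappa,s_1,\dots,s_{\kappa-1})$. For a parity sequence $t$, $\mathcal V_t$ is the superspace with basis $v_1,\dots,v_\kappa$ and $|v_j|=(1-t_j)/2$; tensor products are super tensor products. The Hecke algebra $\mathbb H_\ell$ (generated by $T_i^{\pm1}$, $1\leqslant i<\ell$, with $(T_i+1)(T_i-q^2)=0$ and braid relations) acts on $\mathcal V_t^{\otimes\ell}$ by letting $T_i$ act on factors $i,i+1$ via $\mathcal T(v_a\otimes v_a)=t_aq^{1+t_a}v_a\otimes v_a$, $\mathcal T(v_a\otimes v_b)=(-1)^{|v_a||v_b|}qv_b\otimes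 v_a$ ($a<b$), $\mathcal T(v_a\otimes v_b)=(-1)^{|v_a||v_b|}qv_b\otimes v_a+(q^2-1)v_a\otimes v_b$ ($a>b$). $\ddot{\mathbb H}_\ell$ is the double affine Hecke algebra generated by $T_i^{\pm1}$ ($1\leqslant i<\ell$), $X_j^{\pm1},Y_j^{\pm1}$ ($1\leqslant j\leqslant\ell$) with relations: $T_iT_i^{-1}=T_i^{-1}T_i=1$, $(T_i+1)(T_i-q^2)=0$, $T_iT_{i+1}T_i=T_{i+1}T_iT_{i+1}$, $T_iT_j=T_jT_i$ ($|i-j|>1$); the $X_j^{\pm1}$ commute and are mutually inverse, likewise the $Y_j^{\pm1}$; $X_0Y_1=\zeta Y_1X_0$ with $X_0=X_1\cdots X_\ell$; $T_iX_iT_i=q^2X_{i+1}$, $T_i^{-1}Y_iT_i^{-1}=q^{-2}Y_{i+1}$, $X_2Y_1^{-1}X_2^{-1}Y_1=q^{-2}T_1^2$; $X_jT_i=T_iX_j$ and $Y_jT_i=T_iY_j$ for $j\neq i,i+1$. The tensor products are over $\mathbb H_\ell\subset\ddot{\mathbb H}_\ell$. *)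

(* Defs.v *)
(* The base field C is modelled as  R[i] = complex R  for an
   arbitrary  R : realType  (every realType is a model of the reals). *)
From HB Require Import structures.
From mathcomp Require Import all_boot all_order all_algebra.
From mathcomp Require Import complex.
From mathcomp Require Import reals.
Set Implicit Arguments. Unset Strict Implicit. Unset Printing Implicit Defensive.
Import Order.TTheory GRing.Theory Num.Theory.
Local Open Scope ring_scope.

(* A right DAHA-module is a C-vector space M with linear operators giving the
   right action of the generators:  w . T_i = T i w,  w . T_i^{-1} = Tinv i w,
   w . X_j^{±1} = X j w / Xinv j w,  w . Y_j^{±1} = Y j w / Yinv j w.
   Indices are 1-based as in the paper.  Since the action is a right action,
   a word  a1 a2 ... ak  acts on w as  ak (... (a1 w)).                      *)

Fixpoint prodX (M : Type) (X : nat -> M -> M) (k : nat) (w : M) : M :=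
  match k with 0 => w | k'.+1 => X k (prodX X k' w) end.

Definition is_right_DAHA_module (C : fieldType) (M : lmodType C) (l : nat)
  (q zeta : C) (T Tinv X Xinv Y Yinv : nat -> {linear M -> M}) : Prop :=
  let isT i := (1 <= i < l)%N in
  let isJ j := (1 <= j <= l)%N in
  [/\ [/\
      (forall i w, isT i -> Tinv i (T i w) = w /\ T i (Tinv i w) = w),
      (* (T_i + 1)(T_i - q^2) = 0 *)
      (forall i w, isT i -> T i (T i w) + (1 - q ^+ 2) *: T i w - q ^+ 2 *: w = 0),
      (forall i w, isT i -> isT i.+1 ->
          T i (T i.+1 (T i w)) = T i.+1 (T i (T i.+1 w))) &
      (forall i j w, isT i -> isT j -> (i.+1 < j)%N \/ (j.+1 < i)%N ->
          T j (T i w) = T i (T j w))],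
      [/\
      (forall j w, isJ j -> Xinv j (X j w) = w /\ X j (Xinv j w) = w),
      (forall j k w, isJ j -> isJ k ->
          [/\ X k (X j w) = X j (X k w), Xinv k (X j w) = X j (Xinv k w)
            & Xinv k (Xinv j w) = Xinv j (Xinv k w)]),
      (forall j w, isJ j -> Yinv j (Y j w) = w /\ Y j (Yinv j w) = w) &
      (forall j k w, isJ j -> isJ k ->
          [/\ Y k (Y j w) = Y j (Y k w), Yinv k (Y j w) = Y j (Yinv k w)
            & Yinv k (Yinv j w) = Yinv j (Yinv k w)])] &
      [/\ (* X_0 Y_1 = zeta Y_1 X_0,  X_0 = X_1 ... X_l *)
          (forall w, Y 1 (prodX X l w) = zeta *: prodX X l (Y 1 w)),
          (forall i w, isT i -> T i (X i (T i w)) = q ^+ 2 *: X i.+1 w),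
          (forall i w, isT i -> Tinv i (Y i (Tinv i w)) = q ^- 2 *: Y i.+1 w),
          (forall w, (2 <= l)%N ->
              Y 1 (Xinv 2 (Yinv 1 (X 2 w))) = q ^- 2 *: T 1 (T 1 w)) &
          (forall i j w, isT i -> isJ j -> j != i -> j != i.+1 ->
              [/\ T i (X j w) = X j (T i w) & T i (Y j w) = Y j (T i w)])]].

(* s : {ffun 'I_kappa -> int}, s j = s_{j+1} (0-based indices). *)
Definition parity_seq (m n : nat) (s : {ffun 'I_(m + n) -> int}) : Prop :=
  (forall j, s j = 1 \/ s j = -1) /\ #|[set j | s j == 1]| = m.

Definition tau_ps (k : nat) (s : {ffun 'I_k -> int}) : {ffun 'I_k -> int} :=
  [ffun j => s (ord_pred j)].

(* Multi-indices J = (j_1,...,j_l), 0-based: J p = j_{p+1} - 1.  The space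
   M (x)_C V_t^{(x) l} is identified with {ffun multi-index -> M}, the
   function f standing for  sum_J f J (x) v_{j_1} (x) ... (x) v_{j_l}.       *)
Definition midx (l k : nat) := {ffun 'I_l -> 'I_k}.

Definition etens (C : fieldType) (M : lmodType C) (l k : nat) (w : M)
  (J : midx l k) : {ffun midx l k -> M} :=
  [ffun K => if K == J then w else 0].

Definition swapJ (l k : nat) (p p' : 'I_l) (J : midx l k) : midx l k :=
  [ffun r => if r == p then J p' else if r == p' then J p else J r].

(* w (x) (T_{p+1} . v_J), where T_{p+1} acts on factors p+1, p+2 (1-based)
   of the super tensor product V_t^{(x) l} through the operator cal_T;
   cal_T is even, so no Koszul sign arises from the preceding factors.
   (-1)^{|v_a||v_b|} = -1 iff t_a = t_b = -1. *)
Definition w_tens_Tv (C : fieldType) (M : lmodType C) (l k : nat) (q : C)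
  (t : {ffun 'I_k -> int}) (p p' : 'I_l) (w : M) (J : midx l k)
  : {ffun midx l k -> M} :=
  let a := J p in let b := J p' in
  let sgn : C := if (t a == -1) && (t b == -1) then -1 else 1 in
  if a == b then etens ((t a)%:~R * q ^ (1 + t a) *: w) J
  else if (a < b)%N then etens ((sgn * q) *: w) (swapJ p p' J)
  else etens ((sgn * q) *: w) (swapJ p p' J) + etens ((q ^+ 2 - 1) *: w) J.

Inductive span_of (C : fieldType) (V : lmodType C) (P : V -> Prop) : V -> Prop :=
  | span0 : span_of P 0
  | span_gen v : P v -> span_of P v
  | spanD u v : span_of P u -> span_of P v -> span_of P (u + v)
  | spanZ (c : C) v : span_of P v -> span_of P (c *: v).

(* The generators  (w . T_i) (x) v_J - w (x) (T_i . v_J)  of the kernel of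
   M (x)_C V_t^{(x) l} ->> M (x)_{H_l} V_t^{(x) l}. *)
Definition hecke_rel (C : fieldType) (M : lmodType C) (l k : nat) (q : C)
  (t : {ffun 'I_k -> int}) (T : nat -> {linear M -> M})
  (f : {ffun midx l k -> M}) : Prop :=
  exists (p p' : 'I_l) (w : M) (J : midx l k),
    val p' = (val p).+1 /\
    f = etens (T (val p).+1 w) J - w_tens_Tv q t p p' w J.

Definition hecke_ker (C : fieldType) (M : lmodType C) (l k : nat) (q : C)
  (t : {ffun 'I_k -> int}) (T : nat -> {linear M -> M}) :
  {ffun midx l k -> M} -> Prop :=
  span_of (hecke_rel q t T).

Definition xfac (C : fieldType) (M : lmodType C) (l k : nat)
  (Xinv : nat -> {linear M -> M}) (J : midx l k) (w : M) : M :=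
  foldl (fun w' (r : 'I_l) => if val (J r) == k.-1 then Xinv (val r).+1 w' else w')
        w (enum 'I_l).

Definition shiftJ (l k : nat) (J : midx l k) : midx l k := [ffun r => ordS (J r)].

Definition Psi_lift (C : fieldType) (M : lmodType C) (l k : nat)
  (Xinv : nat -> {linear M -> M}) (f : {ffun midx l k -> M}) : {ffun midx l k -> M} :=
  \sum_(J : midx l k) etens (xfac Xinv J (f J)) (shiftJ J).

(* Main.v *)
Require Import Defs.
From HB Require Import structures.
From mathcomp Require Import all_boot all_order all_algebra zify.
From mathcomp Require Import complex.
From mathcomp Require Import reals.
Set Implicit Arguments. Unset Strict Implicit. Unset Printing Implicit Defensive.
Import Order.TTheory GRing.Theory Num.Theory.
Local Open Scope ring_scope.

Definition stepX (C : fieldType) (M : lmodType C) (l : nat)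
  (Xinv : nat -> {linear M -> M}) (P : pred 'I_l) :=
  fun w (r : 'I_l) => if P r then Xinv (val r).+1 w else w.

Lemma xfacE (C : fieldType) (M : lmodType C) (l k : nat)
  (Xinv : nat -> {linear M -> M}) (J : midx l k) w :
  xfac Xinv J w = foldl (stepX Xinv (fun r => val (J r) == k.-1)) w (enum 'I_l).
Proof. by []. Qed.

Lemma foldl_comm (C : fieldType) (M : lmodType C) (l : nat)
  (Xinv : nat -> {linear M -> M}) (P : pred 'I_l) (A : M -> M) s w :
  (forall r u, r \in s -> P r -> A (Xinv (val r).+1 u) = Xinv (val r).+1 (A u)) ->
  foldl (stepX Xinv P) (A w) s = A (foldl (stepX Xinv P) w s).
Proof.
elim: s w => [|r s IH] w H //=.
have -> : stepX Xinv P (A w) r = A (stepX Xinv P w r).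
  by rewrite /stepX; case: ifP => // Pr; rewrite H // mem_head.
by apply: IH => r' u rs; apply: H; rewrite in_cons rs orbT.
Qed.

Lemma foldl_ext (C : fieldType) (M : lmodType C) (l : nat)
  (Xinv : nat -> {linear M -> M}) (P Q : pred 'I_l) s w :
  P =1 Q -> foldl (stepX Xinv P) w s = foldl (stepX Xinv Q) w s.
Proof.
move=> PQ; elim: s w => [|r s IH] w //=.
by rewrite IH /stepX PQ.
Qed.

Lemma foldl_lin (C : fieldType) (M : lmodType C) (l : nat)
  (Xinv : nat -> {linear M -> M}) (P : pred 'I_l) s (a : C) u v :
  foldl (stepX Xinv P) (a *: u + v) s =
  a *: foldl (stepX Xinv P) u s + foldl (stepX Xinv P) v s.
Proof.
elim: s u v => [|r s IH] u v //=.
rewrite -IH; congr foldl; rewrite /stepX; case: ifP => // _.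
by rewrite linearP.
Qed.

Lemma foldl_split (C : fieldType) (M : lmodType C) (l : nat)
  (Xinv : nat -> {linear M -> M}) (P : pred 'I_l) (p : 'I_l) s w :
  uniq s ->
  (forall (r : 'I_l) u, Xinv (val r).+1 (Xinv (val p).+1 u) = Xinv (val p).+1 (Xinv (val r).+1 u)) ->
  foldl (stepX Xinv P) w s =
  foldl (stepX Xinv (fun r => P r && (r != p)))
        (if P p && (p \in s) then Xinv (val p).+1 w else w) s.
Proof.
move=> + Hc; elim: s w => [|r s IH] w /=; first by rewrite andbF.
case/andP=> rs us; rewrite in_cons.
have [rp|rp] := eqVneq r p.
  subst p; rewrite IH // (negbTE rs) andbF /= /stepX eqxx andbF andbT.
  by case: (P r).
rewrite IH //= /stepX rp andbT.
case: (P p && (p \in s)); case: (P r) => //.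
by rewrite Hc.
Qed.

Lemma etensP (C : fieldType) (M : lmodType C) (l k : nat) (a : C) (u v : M) (J : midx l k) :
  etens (a *: u + v) J = a *: etens u J + etens v J.
Proof. by apply/ffunP => K; rewrite !ffunE; case: ifP; rewrite ?scaler0 ?addr0. Qed.

Lemma etensD (C : fieldType) (M : lmodType C) (l k : nat) (u v : M) (J : midx l k) :
  etens (u + v) J = etens u J + etens v J.
Proof. by apply/ffunP => K; rewrite !ffunE; case: ifP; rewrite ?addr0. Qed.

Lemma etensZ (C : fieldType) (M : lmodType C) (l k : nat) (a : C) (u : M) (J : midx l k) :
  etens (a *: u) J = a *: etens u J.
Proof. by apply/ffunP => K; rewrite !ffunE; case: ifP; rewrite ?scaler0. Qed.

Lemma etens0 (C : fieldType) (M : lmodType C) (l k : nat) (J : midx l k) :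
  etens (0 : M) J = 0.
Proof. by apply/ffunP => K; rewrite !ffunE; case: ifP. Qed.

Lemma etensB (C : fieldType) (M : lmodType C) (l k : nat) (u v : M) (J : midx l k) :
  etens (u - v) J = etens u J - etens v J.
Proof. by apply/ffunP => K; rewrite !ffunE; case: ifP; rewrite ?subr0. Qed.

Lemma xfacP (C : fieldType) (M : lmodType C) (l k : nat)
  (Xinv : nat -> {linear M -> M}) (J : midx l k) (a : C) u v :
  xfac Xinv J (a *: u + v) = a *: xfac Xinv J u + xfac Xinv J v.
Proof. by rewrite !xfacE foldl_lin. Qed.

Lemma xfac0 (C : fieldType) (M : lmodType C) (l k : nat)
  (Xinv : nat -> {linear M -> M}) (J : midx l k) :
  xfac Xinv J 0 = 0.
Proof.
have := xfacP Xinv J (-1) 0 0.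
by rewrite scaler0 addr0 scaleN1r addNr.
Qed.

Lemma xfacZ (C : fieldType) (M : lmodType C) (l k : nat)
  (Xinv : nat -> {linear M -> M}) (J : midx l k) (a : C) u :
  xfac Xinv J (a *: u) = a *: xfac Xinv J u.
Proof. by rewrite -[a *: u]addr0 xfacP xfac0 addr0. Qed.

Lemma Psi_etens (C : fieldType) (M : lmodType C) (l k : nat)
  (Xinv : nat -> {linear M -> M}) (u : M) (J : midx l k) :
  Psi_lift Xinv (etens u J) = etens (xfac Xinv J u) (shiftJ J).
Proof.
rewrite /Psi_lift (bigD1 J) //= big1 ?addr0; first by rewrite ffunE eqxx.
by move=> K KJ; rewrite ffunE (negbTE KJ) xfac0 etens0.
Qed.

Lemma PsiP (C : fieldType) (M : lmodType C) (l k : nat)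
  (Xinv : nat -> {linear M -> M}) (a : C) (f g : {ffun midx l k -> M}) :
  Psi_lift Xinv (a *: f + g) = a *: Psi_lift Xinv f + Psi_lift Xinv g.
Proof.
rewrite /Psi_lift scaler_sumr -big_split /=; apply: eq_bigr => J _.
by rewrite !ffunE xfacP etensP.
Qed.

Lemma PsiD (C : fieldType) (M : lmodType C) (l k : nat)
  (Xinv : nat -> {linear M -> M}) (f g : {ffun midx l k -> M}) :
  Psi_lift Xinv (f + g) = Psi_lift Xinv f + Psi_lift Xinv g.
Proof. by have := PsiP Xinv 1 f g; rewrite !scale1r. Qed.

Lemma Psi0 (C : fieldType) (M : lmodType C) (l k : nat)
  (Xinv : nat -> {linear M -> M}) :
  Psi_lift Xinv (0 : {ffun midx l k -> M}) = 0.
Proof.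
have := PsiP Xinv (-1) (0 : {ffun midx l k -> M}) 0.
by rewrite scaler0 addr0 scaleN1r addNr.
Qed.

Lemma PsiZ (C : fieldType) (M : lmodType C) (l k : nat)
  (Xinv : nat -> {linear M -> M}) (a : C) (f : {ffun midx l k -> M}) :
  Psi_lift Xinv (a *: f) = a *: Psi_lift Xinv f.
Proof. by rewrite -[a *: f]addr0 PsiP Psi0 addr0. Qed.

Lemma PsiB (C : fieldType) (M : lmodType C) (l k : nat)
  (Xinv : nat -> {linear M -> M}) (f g : {ffun midx l k -> M}) :
  Psi_lift Xinv (f - g) = Psi_lift Xinv f - Psi_lift Xinv g.
Proof. by rewrite -scaleN1r PsiD PsiZ scaleN1r. Qed.

Lemma span_map (C : fieldType) (V W : lmodType C) (F : V -> W) (P : V -> Prop) (Q : W -> Prop) :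
  F 0 = 0 -> (forall u v, F (u + v) = F u + F v) -> (forall a v, F (a *: v) = a *: F v) ->
  (forall v, P v -> span_of Q (F v)) ->
  forall v, span_of P v -> span_of Q (F v).
Proof.
move=> F0 FD FZ H v; elim => [|u Pu|u w _ IHu _ IHw|a u _ IH].
- rewrite F0; exact: span0.
- exact: H.
- rewrite FD; exact: spanD.
- rewrite FZ; exact: spanZ.
Qed.

Lemma Xnext_expr (C : fieldType) (M : lmodType C) (q : C) (T X : {linear M -> M})
  (X' : M -> M) :
  q != 0 -> (forall w, T (X (T w)) = q ^+ 2 *: X' w) ->
  forall w, X' w = q ^- 2 *: T (X (T w)).
Proof.
move=> q0 H w; rewrite H scalerA mulVf ?scale1r //.
by rewrite expf_neq0.
Qed.

Lemma E1_lem (C : fieldType) (M : lmodType C) (q : C) (T Xi Xj Xii Xji : {linear M -> M}) :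
  q != 0 ->
  (forall w, Xii (Xi w) = w /\ Xi (Xii w) = w) ->
  (forall w, Xji (Xj w) = w /\ Xj (Xji w) = w) ->
  (forall w, Xj (Xi w) = Xi (Xj w)) ->
  (forall w, Xji (Xi w) = Xi (Xji w)) ->
  (forall w, T (Xi (T w)) = q ^+ 2 *: Xj w) ->
  forall w, T (Xji (Xii w)) = Xji (Xii (T w)).
Proof.
move=> q0 Hi Hj Hc Hc' H.
have HX := Xnext_expr q0 H.
have Ea : forall w, T (Xj (Xi w)) = Xj (Xi (T w)).
  by move=> w; rewrite Hc (HX w) (HX (Xi (T w))) !linearZ.
have DE : forall w, Xji (Xii (Xj (Xi w))) = w.
  by move=> w; rewrite Hc (proj1 (Hi _)) (proj1 (Hj _)).
have ED : forall w, Xj (Xi (Xji (Xii w))) = w.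
  move=> w.
  have -> : Xi (Xji (Xii w)) = Xji (Xi (Xii w)) by rewrite Hc'.
  by rewrite (proj2 (Hi _)) (proj2 (Hj _)).
move=> w.
by rewrite -{1}[T (Xji (Xii w))]DE -Ea ED.
Qed.

Lemma quad_lem (C : fieldType) (M : lmodType C) (q : C) (T : {linear M -> M}) :
  (forall w, T (T w) + (1 - q ^+ 2) *: T w - q ^+ 2 *: w = 0) ->
  forall w, T (T w) = (q ^+ 2 - 1) *: T w + q ^+ 2 *: w.
Proof.
move=> H w; move/eqP: (H w); rewrite subr_eq0 => /eqP <-.
rewrite addrCA -scalerDl (_ : q ^+ 2 - 1 + (1 - q ^+ 2) = 0) ?scale0r ?addr0 //.
by rewrite addrC addrA subrK subrr.
Qed.

Lemma E2_lem (C : fieldType) (M : lmodType C) (q : C) (T Tinv Xi Xj Xii Xji : {linear M -> M}) :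
  (forall w, Tinv (T w) = w) ->
  (forall w, T (T w) + (1 - q ^+ 2) *: T w - q ^+ 2 *: w = 0) ->
  (forall w, Xii (Xi w) = w /\ Xi (Xii w) = w) ->
  (forall w, Xji (Xj w) = w /\ Xj (Xji w) = w) ->
  (forall w, T (Xi (T w)) = q ^+ 2 *: Xj w) ->
  forall w, Xii (T w) - (q ^+ 2 - 1) *: Xii w = T (Xji w).
Proof.
move=> Tinj Hq Hi Hj H w.
have Q := quad_lem Hq.
suff S : Xi (T (Xji w)) = T w - (q ^+ 2 - 1) *: w.
  rewrite -[RHS](proj1 (Hi (T (Xji w)))) S raddfB /=.
  have -> : Xii ((q ^+ 2 - 1) *: w) = (q ^+ 2 - 1) *: Xii w by rewrite linearZ.
  by [].
apply: (can_inj Tinj).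
rewrite H (proj2 (Hj _)) linearB linearZ /= Q.
by rewrite addrAC subrr add0r.
Qed.

Lemma E3_lem (C : fieldType) (M : lmodType C) (q : C) (T Xi Xj Xii Xji : {linear M -> M}) :
  q != 0 ->
  (forall w, T (T w) + (1 - q ^+ 2) *: T w - q ^+ 2 *: w = 0) ->
  (forall w, Xii (Xi w) = w /\ Xi (Xii w) = w) ->
  (forall w, Xji (Xj w) = w /\ Xj (Xji w) = w) ->
  (forall w, T (Xi (T w)) = q ^+ 2 *: Xj w) ->
  forall w, T (Xii w) - (q ^+ 2 - 1) *: Xii w = Xji (T w).
Proof.
move=> q0 Hq Hi Hj H w.
have Q := quad_lem Hq.
have HX := Xnext_expr q0 H.
suff S : Xj (T (Xii w) - (q ^+ 2 - 1) *: Xii w) = T w.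
  by rewrite -S (proj1 (Hj _)).
rewrite HX linearB linearZ /= Q addrAC subrr add0r.
rewrite linearZ linearZ /= (proj2 (Hi _)) scalerA mulVf ?scale1r //.
by rewrite expf_neq0.
Qed.

Definition Qp (l k : nat) (p p' : 'I_l) (J : midx l k) : pred 'I_l :=
  fun r => (val (J r) == k.-1) && (r != p) && (r != p').

Lemma xfac_decomp (C : fieldType) (M : lmodType C) (l k : nat)
  (Xinv : nat -> {linear M -> M}) (p p' : 'I_l) (J : midx l k) u :
  p != p' ->
  (forall (r r' : 'I_l) u, Xinv (val r).+1 (Xinv (val r').+1 u) = Xinv (val r').+1 (Xinv (val r).+1 u)) ->
  xfac Xinv J u =
  foldl (stepX Xinv (Qp p p' J))
    (let u1 := if val (J p) == k.-1 then Xinv (val p).+1 u else u in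
     if val (J p') == k.-1 then Xinv (val p').+1 u1 else u1) (enum 'I_l).
Proof.
move=> pp' Hc.
rewrite xfacE (@foldl_split _ _ _ Xinv _ p) ?enum_uniq // mem_enum andbT.
rewrite (@foldl_split _ _ _ Xinv _ p') ?enum_uniq // mem_enum andbT (eq_sym p' p) pp' andbT.
by [].
Qed.

Lemma Qp_swap (l k : nat) (p p' : 'I_l) (J : midx l k) :
  Qp p p' (swapJ p p' J) =1 Qp p p' J.
Proof.
move=> r; rewrite /Qp ffunE.
by case: (eqVneq r p) => [_|rp] /=; rewrite ?andbF //; case: (eqVneq r p') => [_|rp'] /=; rewrite ?andbF.
Qed.

Lemma shift_swap (l k : nat) (p p' : 'I_l) (J : midx l k) :
  shiftJ (swapJ p p' J) = swapJ p p' (shiftJ J).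
Proof. by apply/ffunP => r; rewrite !ffunE; case: ifP => _; rewrite ?ffunE //; case: ifP; rewrite ?ffunE. Qed.

Lemma tau_ordS (k : nat) (s : {ffun 'I_k -> int}) x : tau_ps s (ordS x) = s x.
Proof. by rewrite ffunE ordSK. Qed.

Lemma ordS_val k (x : 'I_k) : val (ordS x) = if val x == k.-1 then 0%N else (val x).+1.
Proof.
rewrite /= ; case: eqP => [->|ne].
  by have := ltn_ord x; case: k x => // k x _ /=; rewrite modnn.
rewrite modn_small //; have := ltn_ord x; case: k x ne => // k x /= ne.
by rewrite ltnS leq_eqVlt => /orP[/eqP|].
Qed.

Lemma gen_case (C : fieldType) (M : lmodType C) (l k : nat) (q : C)
  (s : {ffun 'I_k -> int}) (T Tinv X Xinv : nat -> {linear M -> M})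
  (p p' : 'I_l) (w : M) (J : midx l k) :
  q != 0 -> val p' = (val p).+1 ->
  (forall u, Tinv (val p).+1 (T (val p).+1 u) = u) ->
  (forall u, T (val p).+1 (T (val p).+1 u) + (1 - q ^+ 2) *: T (val p).+1 u - q ^+ 2 *: u = 0) ->
  (forall u, T (val p).+1 (X (val p).+1 (T (val p).+1 u)) = q ^+ 2 *: X (val p).+2 u) ->
  (forall j u, (1 <= j <= l)%N -> Xinv j (X j u) = u /\ X j (Xinv j u) = u) ->
  (forall j j' u, (1 <= j <= l)%N -> (1 <= j' <= l)%N ->
     [/\ X j' (X j u) = X j (X j' u), Xinv j' (X j u) = X j (Xinv j' u)
       & Xinv j' (Xinv j u) = Xinv j (Xinv j' u)]) ->
  (forall j u, (1 <= j <= l)%N -> j != (val p).+1 -> j != (val p).+2 ->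
     T (val p).+1 (X j u) = X j (T (val p).+1 u)) ->
  hecke_rel q (tau_ps s) T
    (Psi_lift Xinv (etens (T (val p).+1 w) J - w_tens_Tv q s p p' w J)).
Proof.
move=> q0 hp' Tc Tq TXT Xv Xc TX.
set i := (val p).+1.
have ir : forall r : 'I_l, (1 <= (val r).+1 <= l)%N by move=> r; rewrite /= ltn_ord.
have pp' : p != p' by apply/eqP => E; move: hp'; rewrite E; lia.
have Hc : forall (r r' : 'I_l) u, Xinv (val r).+1 (Xinv (val r').+1 u) = Xinv (val r').+1 (Xinv (val r).+1 u).
  by move=> r r' u; case: (Xc _ _ u (ir r') (ir r)).
have p'i : (val p').+1 = i.+1 by rewrite hp'.
have TXi : forall (r : 'I_l) u, r != p -> r != p' -> T i (Xinv (val r).+1 u) = Xinv (val r).+1 (T i u).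
  move=> r u rp rp'.
  have ne1 : (val r).+1 != i by rewrite eqSS; apply: contra rp => /eqP /val_inj ->.
  have ne2 : (val r).+1 != i.+1 by rewrite eqSS /i -hp'; apply: contra rp' => /eqP /val_inj ->.
  have [h1 h2] := Xv _ (T i (Xinv (val r).+1 u)) (ir r).
  by rewrite -h1 -TX // (proj2 (Xv _ _ (ir r))).
pose G := fun (K : midx l k) (u : M) => foldl (stepX Xinv (Qp p p' K)) u (enum 'I_l).
have GT : forall K u, G K (T i u) = T i (G K u).
  move=> K u; rewrite /G foldl_comm // => r v _; rewrite /Qp => /andP[/andP[_ a] b].
  by rewrite TXi.
have Gsw : forall u, G (swapJ p p' J) u = G J u by move=> u; apply: foldl_ext; exact: Qp_swap.
have xdec : forall K u, xfac Xinv K u = G K (let u1 := if val (K p) == k.-1 then Xinv (val p).+1 u else u in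
     if val (K p') == k.-1 then Xinv (val p').+1 u1 else u1).
  by move=> K u; rewrite (xfac_decomp _ _ pp' Hc).
have ii : (1 <= i <= l)%N by exact: ir p.
have ii1 : (1 <= i.+1 <= l)%N by rewrite -p'i; exact: ir p'.
have E1 := E1_lem q0 (Xv _ ^~ ii) (Xv _ ^~ ii1) (fun u => let: And3 a _ _ := Xc _ _ u ii ii1 in a)
   (fun u => let: And3 _ a _ := Xc _ _ u ii ii1 in a) TXT.
have E2 := E2_lem Tc Tq (Xv _ ^~ ii) (Xv _ ^~ ii1) TXT.
have E3 := E3_lem q0 Tq (Xv _ ^~ ii) (Xv _ ^~ ii1) TXT.
have J'p : shiftJ J p = ordS (J p) by rewrite ffunE.
have J'p' : shiftJ J p' = ordS (J p') by rewrite ffunE.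
rewrite PsiB Psi_etens /w_tens_Tv /=.
rewrite p'i in xdec.
case: eqP => [ab|nab].
  exists p, p', (xfac Xinv J w), (shiftJ J); split => //.
  rewrite /w_tens_Tv /= J'p J'p' !tau_ordS (inj_eq (@ordS_inj _)) ab eqxx Psi_etens xfacZ.
  congr (etens _ _ - _); rewrite !xdec /= -ab.
  case: (val (J p) == k.-1); last exact: GT.
  rewrite -E1; exact: GT.
have Glin : forall K (a : C) u v, G K (a *: u + v) = a *: G K u + G K v.
  by move=> K a u v; rewrite /G foldl_lin.
have pNp' : (p' == p) = false by apply/negbTE; rewrite eq_sym.
have xS : forall u, xfac Xinv (swapJ p p' J) u =
   G J (let u1 := if val (J p') == k.-1 then Xinv (val p).+1 u else u in
     if val (J p) == k.-1 then Xinv i.+1 u1 else u1).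
  by move=> u; rewrite xdec Gsw !ffunE eqxx pNp' eqxx.
have ltk : forall x : 'I_k, val x != k.-1 -> (val x < k.-1)%N.
  move=> x ne; rewrite ltn_neqAle ne /= -ltnS prednK //.
  exact: leq_ltn_trans (leq0n _) (ltn_ord x).
case Ea: (val (J p) == k.-1); case Eb: (val (J p') == k.-1).
- by exfalso; apply: nab; apply: val_inj; move/eqP: Ea => ->; move/eqP: Eb.
-
  have ltab : (J p < J p')%N = false.
    apply/negbTE; rewrite -leqNgt; move/eqP: Ea => ->.
    by move/negbT: Eb => /ltk /ltnW.
  exists p, p', (xfac Xinv (swapJ p p' J) w), (shiftJ J); split => //.
  rewrite /w_tens_Tv /= J'p J'p' !tau_ordS (inj_eq (@ordS_inj _)).
  have -> : (J p == J p') = false by apply/eqP.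
  have -> : (ordS (J p) < ordS (J p'))%N.
    by rewrite ![nat_of_ord (ordS _)]ordS_val Ea Eb.
  rewrite ltab PsiD !Psi_etens !xfacZ shift_swap xS !xdec /= Ea Eb.
  have K2 : Xinv i (T i w) = (q ^+ 2 - 1) *: Xinv i w + T i (Xinv i.+1 w).
    by rewrite -E2 addrC subrK.
  rewrite K2 Glin GT etensD (addrC (etens _ (swapJ _ _ _))) opprD addrACA subrr add0r.
  by [].
-
  have ltab : (J p < J p')%N.
    by move/eqP: Eb => ->; move/negbT: Ea => /ltk.
  exists p, p', (xfac Xinv (swapJ p p' J) w), (shiftJ J); split => //.
  rewrite /w_tens_Tv /= J'p J'p' !tau_ordS (inj_eq (@ordS_inj _)).
  have -> : (J p == J p') = false by apply/eqP.
  have -> : (ordS (J p) < ordS (J p'))%N = false.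
    by rewrite ![nat_of_ord (ordS _)]ordS_val Ea Eb.
  rewrite ltab !Psi_etens !xfacZ shift_swap xS !xdec /= Ea Eb.
  have K3 : Xinv i.+1 (T i w) = (- (q ^+ 2 - 1)) *: Xinv i w + T i (Xinv i w).
    by rewrite -E3 addrC scaleNr.
  rewrite K3 Glin GT !etensD !etensZ scaleNr.
  rewrite opprD addrA (addrC (- _)) addrAC.
  by [].
-
  exists p, p', (xfac Xinv J w), (shiftJ J); split => //.
  rewrite /w_tens_Tv /= J'p J'p' !tau_ordS (inj_eq (@ordS_inj _)).
  have -> : (J p == J p') = false by apply/eqP.
  have -> : (ordS (J p) < ordS (J p'))%N = (J p < J p')%N.
    by rewrite ![nat_of_ord (ordS _)]ordS_val Ea Eb.
  case: (J p < J p')%N; rewrite ?PsiD !Psi_etens !xfacZ shift_swap xS !xdec /= Ea Eb GT //.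
Qed.

Unset Implicit Arguments.
Theorem lemma4p2 (R : realType) (m n l : nat) (q zeta : R[i])
  (M : lmodType R[i]) (T Tinv X Xinv Y Yinv : nat -> {linear M -> M})
  (s : {ffun 'I_(m + n) -> int}) :
  m != n -> (1 <= l)%N ->
  q != 0 -> (forall k : nat, (0 < k)%N -> q ^+ k != 1) -> zeta != 0 ->
  parity_seq s ->
  is_right_DAHA_module l q zeta T Tinv X Xinv Y Yinv ->
  forall f : {ffun midx l (m + n) -> M},
    hecke_ker q s T f -> hecke_ker q (tau_ps s) T (Psi_lift Xinv f).
Proof.
move=> _ _ q0 _ _ _ [[HT1 HTq _ _] [HX1 HXc _ _] [_ HTXT _ _ HTXc]] f.
apply: span_map; [exact: Psi0 | exact: PsiD | exact: PsiZ |].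
move=> g [p [p' [w [J [hp' ->]]]]]; apply: span_gen.
have isT : (1 <= (val p).+1 < l)%N by rewrite /= -hp' ltn_ord.
apply: (@gen_case _ _ l (m + n) q s T Tinv X Xinv p p' w J) => //.
- by move=> u; case: (HT1 _ u isT).
- by move=> u; apply: HTq.
- by move=> u; apply: HTXT.
- by move=> j u ij ne1 ne2; case: (HTXc _ j u isT ij ne1 ne2).
Qed.
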